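(* Let $n$ items have positive integer sizes $w_1\le w_2\le\dots\le w_n$, with total size $W=\sum_{i=1}^n w_i$, and let there be $m$ bins, bin $j$ having positive integer capacity $C_j$, fixed cost $f_j\ge 0$ and unit cost $c_j\ge 0$, where $\sum_{j=1}^m C_j\ge W$. For each bin set $r_j=f_j/C_j+c_j$, let $a_1,\dots,a_m$ be a permutation of $\{1,\dots,m\}$ with $r_{a_1}\le r_{a_2}\le\dots\le r_{a_m}$, and let $k$ be the minimum integer such that $\sum_{j=1}^{k}C_{a_j}\ge W$. Define $$Lb_1=\sum_{j=1}^{k-1}C_{a_j}r_{a_j}+\Big(W-\sum_{j=1}^{k-1}C_{a_j}\Big)r_{a_k}.$$ Let $z_1^*$ be the optimal value of the linear program $$\min \sum_{j=1}^m (f_jy_j+c_jl_j)$$ subject to $\sum_{j=1}^m x_{ij}=1$ for all $i\in\{1,\dots,n\}$; $\sum_{i=1}^n w_ix_{ij}=l_j$ for all $j\in\{1,\dots,m\}$; $l_j\le C_jy_j$ for all $j$; $0\le x_{ij}\le 1$, $0\le y_j\le 1$, $l_j\ge 0$ for all $i,j$. Then $z_1^*\ge Lb_1$.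
   Context: This linear program is the linear relaxation of an integer program for the Bin Packing with Usage Cost problem, in which each item is assigned to exactly one bin, the load $l_j$ of bin $j$ (total size of its items) may not exceed $C_j$, and a used bin $j$ costs $f_j+c_jl_j$; $y_j$ indicates whether bin $j$ is used and $x_{ij}$ whether item $i$ is in bin $j$. *)

(* Defs.v *)
From HB Require Import structures.
From mathcomp Require Import all_boot all_order all_algebra fingroup perm.
Set Implicit Arguments. Unset Strict Implicit. Unset Printing Implicit Defensive.
Import Order.TTheory GRing.Theory Num.Theory.
Local Open Scope ring_scope.

Section BPUC.
Variables (R : realFieldType) (n m : nat).

Definition bin_ratio (C : 'I_m -> nat) (f c : 'I_m -> R) (j : 'I_m) : R :=
  f j / (C j)%:R + c j.

Definition total_size (w : 'I_n -> nat) : nat := (\sum_(i < n) w i)%N.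

(* capacity of the first t bins in the order a (1-based: C_{a_1}+...+C_{a_t});
   a is a permutation of 'I_m, so position p (0-based) is bin a p. *)
Definition prefix_cap (C : 'I_m -> nat) (a : {perm 'I_m}) (t : nat) : nat :=
  (\sum_(p < m | (p < t)%N) C (a p))%N.

(* Lb_1, where kk = k - 1 is the 0-based position of the critical bin a_k. *)
Definition Lb1 (w : 'I_n -> nat) (C : 'I_m -> nat) (f c : 'I_m -> R)
    (a : {perm 'I_m}) (kk : 'I_m) : R :=
  \sum_(p < m | (p < kk)%N) (C (a p))%:R * bin_ratio C f c (a p)
  + ((total_size w)%:R - (prefix_cap C a kk)%:R) * bin_ratio C f c (a kk).

Definition lp_feasible (w : 'I_n -> nat) (C : 'I_m -> nat)
    (x : 'I_n -> 'I_m -> R) (y l : 'I_m -> R) : Prop :=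
  (forall i, \sum_(j < m) x i j = 1) /\
  (forall j, \sum_(i < n) (w i)%:R * x i j = l j) /\
  (forall j, l j <= (C j)%:R * y j) /\
  (forall i j, 0 <= x i j <= 1) /\
  (forall j, 0 <= y j <= 1) /\
  (forall j, 0 <= l j).

Definition lp_objective (f c : 'I_m -> R) (y l : 'I_m -> R) : R :=
  \sum_(j < m) (f j * y j + c j * l j).

End BPUC.
Arguments bin_ratio {R m}.
Arguments total_size {n}.
Arguments prefix_cap {m}.
Arguments Lb1 {R n m}.
Arguments lp_feasible {R n m}.
Arguments lp_objective {R m}.

(* Main.v *)
Require Import Defs.
From HB Require Import structures.
From mathcomp Require Import all_boot all_order all_algebra fingroup perm.
From mathcomp Require Import ring lra.
Import Order.TTheory GRing.Theory Num.Theory.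
Local Open Scope ring_scope.

Theorem proposition1 (R : realFieldType) (n m : nat)
    (w : 'I_n -> nat) (C : 'I_m -> nat) (f c : 'I_m -> R)
    (a : {perm 'I_m}) (kk : 'I_m) :
  (forall i, (0 < w i)%N) ->
  (forall i j : 'I_n, (i <= j)%N -> (w i <= w j)%N) ->
  (forall j, (0 < C j)%N) ->
  (forall j, 0 <= f j) ->
  (forall j, 0 <= c j) ->
  (total_size w <= \sum_(j < m) C j)%N ->
  (forall p q : 'I_m, (p <= q)%N -> bin_ratio C f c (a p) <= bin_ratio C f c (a q)) ->
  (* k = kk+1 is the minimum index with C_{a_1}+...+C_{a_k} >= W *)
  (total_size w <= prefix_cap C a kk.+1)%N ->
  (forall t : nat, (0 < t <= kk)%N -> (prefix_cap C a t < total_size w)%N) ->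
  forall (x : 'I_n -> 'I_m -> R) (y l : 'I_m -> R),
    lp_feasible w C x y l ->
    Lb1 w C f c a kk <= lp_objective f c y l.
Proof.
move=> _ _ Cpos fpos cpos _ mono _ _ x y l [Hx [Hl [HlC [Hx01 [Hy01 Hl0]]]]].
set r := bin_ratio C f c.
have Cgt0 : forall j, 0 < (C j)%:R :> R by move=> j; rewrite ltr0n.
have lC : forall j, l j <= (C j)%:R.
  move=> j; apply: (le_trans (HlC j)).
  have /andP[_ y1] := Hy01 j.
  by rewrite -[X in _ <= X]mulr1 ler_wpM2l // ler0n.
have sumL : \sum_(j < m) l j = (total_size w)%:R.
  rewrite /total_size natr_sum.
  rewrite (eq_bigr (fun j => \sum_(i < n) (w i)%:R * x i j)); last by move=> j _; rewrite Hl.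
  rewrite exchange_big /=; apply: eq_bigr => i _.
  by rewrite -mulr_sumr Hx mulr1.
have obj : \sum_(j < m) r j * l j <= lp_objective f c y l.
  rewrite /lp_objective; apply: ler_sum => j _.
  rewrite /r /bin_ratio mulrDl lerD2r.
  rewrite -mulrA ler_wpM2l //.
  rewrite mulrC ler_pdivrMr // mulrC; exact: HlC.
apply: le_trans obj.
rewrite (reindex_inj (@perm_inj _ a)) /=.
set rho := r (a kk).
have E1 : \sum_(p < m) r (a p) * l (a p) =
   rho * (total_size w)%:R + \sum_(p < m) (r (a p) - rho) * l (a p).
  have sLa : \sum_(p < m) l (a p) = (total_size w)%:R.
    by rewrite -sumL [in RHS](reindex_inj (@perm_inj _ a)).
  rewrite -sLa mulr_sumr -big_split /=.
  by apply: eq_bigr => p _; ring.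
have E2 : Lb1 w C f c a kk =
   rho * (total_size w)%:R + \sum_(p < m | (p < kk)%N) (r (a p) - rho) * (C (a p))%:R.
  rewrite /Lb1 /prefix_cap natr_sum -/r -/rho.
  have -> : \sum_(p < m | (p < kk)%N) (r (a p) - rho) * (C (a p))%:R =
    \sum_(p < m | (p < kk)%N) (C (a p))%:R * r (a p) - rho * \sum_(p < m | (p < kk)%N) (C (a p))%:R.
    by rewrite mulr_sumr -sumrB; apply: eq_bigr => p _; ring.
  rewrite !natr_sum; ring.
rewrite E1 E2 lerD2l big_mkcond /=; apply: ler_sum => p _.
case: ifP => hp.
  have hle : r (a p) - rho <= 0.
    rewrite subr_le0; apply: mono; exact: ltnW.
  by rewrite ler_wnM2l.
apply: mulr_ge0 => //; rewrite subr_ge0; apply: mono.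
by rewrite leqNgt hp.
Qed.
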